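(* Let the unit circle $\partial\mathbb{B}^2=\{w\in\mathbb{C}:|w|=1\}$ be a reflecting mirror, and suppose light rays arrive from the right side (from a source at $+\infty$ on the real axis), travelling parallel to the real axis. Let $f=re^{i\theta}$ be the observation point, where $r>1$ and $0\le\theta\le\frac{\pi}{2}$. If a light ray of this kind is reflected at a point $w$ of the unit circle (obeying the law of reflection: angle of incidence equals angle of reflection with respect to the normal line through $0$ and $w$) and then reaches $f$, then $w$ is a solution of the equation $$ re^{-i\theta}w^4-w^3+w-re^{i\theta}=0. $$
   Context: The incoming ray at the reflection point $w$ lies on the horizontal line through $w$, coming from the direction of the point $w+1$; the law of reflection means that the oriented angle from the ray direction $w+1-w$ to the normal direction $0-w$ equals the oriented angle from $0-w$ to $f-w$. *)

(* Defs.v *)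
From HB Require Import structures.
From mathcomp Require Import all_boot all_order all_algebra.
From mathcomp Require Import complex.
From mathcomp Require Import reals trigo.
Set Implicit Arguments. Unset Strict Implicit. Unset Printing Implicit Defensive.
Import Order.TTheory GRing.Theory Num.Theory.
Local Open Scope ring_scope.
Local Open Scope complex_scope.

Definition cexpi (R : realType) (r t : R) : R[i] :=
  (r * cos t) +i* (r * sin t).

(* The oriented angle from u1 to v1 equals the oriented angle from u2 to v2
   (as angles mod 2pi): arg (v1/u1) = arg (v2/u2), i.e. the unit complex
   numbers (v1/u1)/|v1/u1| and (v2/u2)/|v2/u2| coincide.  All four vectors
   are required to be nonzero so that the angles are defined. *)
Definition oriented_angle_eq (R : realType) (u1 v1 u2 v2 : R[i]) : Prop :=
  [/\ u1 != 0, v1 != 0, u2 != 0, v2 != 0 &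
      (v1 / u1) / `|v1 / u1| = (v2 / u2) / `|v2 / u2|].

(* Law of reflection at w on the unit circle for a horizontal ray coming
   from the direction of w+1, reflected towards f:
   angle(w+1-w, 0-w) = angle(0-w, f-w). *)
Definition reflects_to (R : realType) (w f : R[i]) : Prop :=
  oriented_angle_eq (w + 1 - w) (0 - w) (0 - w) (f - w).

(* Main.v *)
Require Import Defs.
From HB Require Import structures.
From mathcomp Require Import all_boot all_order all_algebra.
From mathcomp Require Import complex.
From mathcomp Require Import reals trigo.
From mathcomp Require Import ring.
Import Order.TTheory GRing.Theory Num.Theory.
Local Open Scope ring_scope.
Local Open Scope complex_scope.

Lemma cexpiN (R : realType) (r t : R) : cexpi r (- t) = (cexpi r t)^*.
Proof. rewrite /cexpi cosN sinN. by rewrite /= mulrN. Qed.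

Theorem theorem3p1 (R : realType) (r theta : R) (w : R[i])
  (hr : 1 < r) (ht0 : 0 <= theta) (ht1 : theta <= pi / 2)
  (hw : `|w| = 1)
  (hrefl : reflects_to w (cexpi r theta)) :
  cexpi r (- theta) * w ^+ 4 - w ^+ 3 + w - cexpi r theta = 0.
Proof.
rewrite cexpiN; set f := cexpi r theta in hrefl *.
case: hrefl => _ _ wN0 aN0.
rewrite [w + 1]addrC addrK !sub0r divr1 in wN0 *.
rewrite normrM normrV ?unitfE // !normrN hw invr1 !mulr1.
set t := `|f - w|.
have w0 : w != 0 by rewrite -oppr_eq0.
have t0 : t != 0 by rewrite normr_eq0.
move=> E.
have Ef : f = w + t * w ^+ 2.
  have : f - w = t * w ^+ 2.
    have E' := congr1 (fun z => z * t * (- w)) E.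
    have -> : f - w = (f - w) / - w / t * t * - w by field; rewrite ?oppr_eq0 ?t0 ?w0 ?andbT.
    rewrite -E'; ring.
  by move=> <-; rewrite addrC subrK.
have wc : (w^*)%C = w^-1.
  apply: (mulfI w0). rewrite divff // -normCK hw. by rewrite expr1n.
have tc : (t^*)%C = t by exact: (conj_normC (f - w)).
have fc : conjc f = conjc w + conjc t * conjc w ^+ 2.
  by rewrite Ef rmorphD rmorphM rmorphXn.
rewrite fc tc wc Ef.
field. exact: w0.
Qed.
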